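(* Let $n\ge2$ and $\alpha\in\mathbb{Z}_2^n$. Then $$\max_{\beta,\gamma\in\mathbb{Z}_2^n}\mathrm{adp}^{\mathrm{XR}}_1(\alpha,\beta\to\gamma)=\mathrm{adp}^{\oplus}(\alpha,\alpha\to0)=\max_{\beta,\gamma\in\mathbb{Z}_2^n}\mathrm{adp}^{\oplus}(\alpha,\beta\to\gamma).$$
   Context: For $x\in\mathbb{Z}_2^n$, $x=(x_0,\dots,x_{n-1})$ is identified with the integer $\sum_i x_i2^{n-1-i}$; $+$ is addition modulo $2^n$, $\oplus$ is bitwise XOR, $x\lll r=(x_r,\dots,x_{n-1},x_0,\dots,x_{r-1})$. For $f:(\mathbb{Z}_2^n)^2\to\mathbb{Z}_2^n$, $\mathrm{adp}^f(\alpha,\beta\to\gamma)=4^{-n}\#\{(x,y): f(x+\alpha,y+\beta)=f(x,y)+\gamma\}$. $\mathrm{adp}^{\oplus}$ is this for $f(x,y)=x\oplus y$, and $\mathrm{adp}^{\mathrm{XR}}_r$ for $f(x,y)=(x\oplus y)\lll r$. *)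

(* Defs.v *)
From mathcomp Require Import all_boot all_order all_algebra.
Set Implicit Arguments. Unset Strict Implicit. Unset Printing Implicit Defensive.
Import Order.TTheory GRing.Theory Num.Theory.

(* Elements of Z_2^n are represented by their integer value x < 2^n,
   where x = sum_i x_i 2^(n-1-i), i.e. x_0 is the most significant bit. *)

Definition bit (n x i : nat) : bool := odd (x %/ 2 ^ (n.-1 - i)).

Definition addv (n x y : nat) : nat := (x + y) %% 2 ^ n.

Definition xorv (n x y : nat) : nat :=
  \sum_(i < n) (bit n x i (+) bit n y i) * 2 ^ (n.-1 - i).

Definition rotl (n r x : nat) : nat :=
  \sum_(i < n) bit n x ((i + r) %% n) * 2 ^ (n.-1 - i).

Definition xr (n r x y : nat) : nat := rotl n r (xorv n x y).

Definition adp (n : nat) (f : nat -> nat -> nat) (a b g : nat) : rat :=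
  (#|[set p : 'I_(2 ^ n) * 'I_(2 ^ n) |
       f (addv n p.1 a) (addv n p.2 b) == addv n (f p.1 p.2) g]|)%:R
  / (4 ^ n)%:R.

(* max over beta, gamma in Z_2^n (all adp values are >= 0, so 0 is a
   neutral bottom for the max) *)
Definition max_adp (n : nat) (f : nat -> nat -> nat) (a : nat) : rat :=
  \big[Num.max/0%R]_(b < 2 ^ n) \big[Num.max/0%R]_(g < 2 ^ n) adp n f a b g.

(* Main.v *)
Require Import Defs.
From mathcomp Require Import all_boot all_order all_algebra.
From mathcomp Require Import zify.
Set Implicit Arguments. Unset Strict Implicit. Unset Printing Implicit Defensive.

Definition X (m p q : nat) : nat :=
  \sum_(k < m) (odd (p %/ 2^k) (+) odd (q %/ 2^k)) * 2^k.

Lemma X0 p q : X 0 p q = 0.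
Proof. by rewrite /X big_ord0. Qed.

Lemma XS m p q : X m.+1 p q = (odd p (+) odd q) + 2 * X m (p %/ 2) (q %/ 2).
Proof.
rewrite /X big_ord_recl /= expn0 !divn1 muln1; congr (_ + _).
rewrite big_distrr /=; apply: eq_bigr => i _.
by rewrite /bump /= add1n expnS -!divnMA mulnCA.
Qed.

Lemma odd_b2 (b : bool) n : odd (b + 2 * n) = b.
Proof. by rewrite oddD oddM /=; case: b. Qed.

Lemma div_b2 (b : bool) n : (b + 2 * n) %/ 2 = n.
Proof. by rewrite mulnC divnDMl //; case: b. Qed.

Lemma oddXk m p q k : k < m ->
  odd (X m p q %/ 2^k) = odd (p %/ 2^k) (+) odd (q %/ 2^k).
Proof.
elim: m p q k => [//|m IH] p q [|k] hk.
  by rewrite XS expn0 !divn1 odd_b2.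
rewrite XS expnS !divnMA div_b2 IH //.
Qed.

Lemma Xmod m p q : X m p q = X m (p %% 2^m) (q %% 2^m).
Proof.
elim: m p q => [|m IH] p q; first by rewrite !X0.
have h r : r %% 2^m.+1 %/ 2 = (r %/ 2) %% 2^m by rewrite modn_divl expnSr.
rewrite !XS !odd_mod ?expnS ?oddM ?andTb // -!expnS !h.
by rewrite [in RHS]IH !modn_mod -IH.
Qed.

Lemma xorvE n x y : xorv n x y = X n x y.
Proof.
rewrite /xorv /X (reindex_inj rev_ord_inj) /=; apply: eq_bigr => i _.
have hi := ltn_ord i.
rewrite /bit /=.
by have -> : n.-1 - (n - i.+1) = i by lia.
Qed.

Lemma rotlX m p q : rotl m.+1 1 (X m.+1 p q) =
  (odd (p %/ 2^m) (+) odd (q %/ 2^m)) + 2 * X m p q.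
Proof.
rewrite /rotl big_ord_recr /= addn1 modnn subnn expn0 muln1 /bit /= subn0.
rewrite oddXk // addnC; congr (_ + _).
rewrite [X m p q]/X big_distrr /= (reindex_inj rev_ord_inj) /=; apply: eq_bigr => i _.
have hi := ltn_ord i.
rewrite modn_small; last by lia.
have -> : m - (m - i.+1 + 1) = i by lia.
have -> : m - (m - i.+1) = i.+1 by lia.
by rewrite oddXk ?expnS 1?mulnCA //; lia.
Qed.

Definition maj (x y z : bool) : bool := [|| x && y, x && z | y && z].

Definition term (m a b g : nat) (c e d : bool) (T : nat -> nat -> nat -> bool)
  (x y : nat) : bool :=
  (X m (x + a + c) (y + b + e) == (X m x y + g + d) %% 2^m) &&
  T ((x + a + c) %/ 2^m) ((y + b + e) %/ 2^m) ((X m x y + g + d) %/ 2^m).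

Definition Cnt m a b g c e d T : nat :=
  \sum_(0 <= x < 2^m) \sum_(0 <= y < 2^m) term m a b g c e d T x y.

Lemma add3 (x a c : bool) : x + a + c = (x (+) a (+) c) + 2 * maj x a c.
Proof. by case: x; case: a; case: c. Qed.

Lemma half_eq a : a = odd a + 2 * (a %/ 2).
Proof. by rewrite {1}(divn_eq a 2) modn2 addnC mulnC. Qed.

Lemma modb2 (r : bool) N k : (r + 2 * N) %% 2^k.+1 = r + 2 * (N %% 2^k).
Proof.
have hs : N %% 2^k < 2^k by rewrite ltn_mod expn_gt0.
have -> : r + 2 * N = N %/ 2^k * 2^k.+1 + (r + 2 * (N %% 2^k)).
  rewrite {1}(divn_eq N (2^k)) expnS.
  move: (N %/ 2^k) (N %% 2^k) (2^k) => u v w; nia.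
rewrite modnMDl modn_small // expnS; case: r => /=; lia.
Qed.

Lemma divb2 (r : bool) N k : (r + 2 * N) %/ 2^k.+1 = N %/ 2^k.
Proof. by rewrite expnS divnMA div_b2. Qed.

Lemma eqb2 (r s : bool) M N : (r + 2 * M == s + 2 * N) = (r == s) && (M == N).
Proof.
apply/eqP/andP => [h|[/eqP -> /eqP ->] //].
have h1 := congr1 odd h; rewrite !odd_b2 in h1.
have h2 := congr1 (fun z => z %/ 2) h; rewrite /= !div_b2 in h2.
by rewrite h1 h2.
Qed.

Lemma termS k a b g c e d T (x0 y0 : bool) x y :
  term k.+1 a b g c e d T (x0 + 2 * x) (y0 + 2 * y) =
  ~~ (odd a (+) odd b (+) odd g (+) c (+) e (+) d) &&
  term k (a %/ 2) (b %/ 2) (g %/ 2) (maj x0 (odd a) c) (maj y0 (odd b) e)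
    (maj (x0 (+) y0) (odd g) d) T x y.
Proof.
have hP : x0 + 2 * x + a + c =
   (x0 (+) odd a (+) c) + 2 * (x + a %/ 2 + maj x0 (odd a) c).
  rewrite {1}(half_eq a); have := add3 x0 (odd a) c; lia.
have hQ : y0 + 2 * y + b + e =
   (y0 (+) odd b (+) e) + 2 * (y + b %/ 2 + maj y0 (odd b) e).
  rewrite {1}(half_eq b); have := add3 y0 (odd b) e; lia.
have hR : forall V, (x0 (+) y0) + 2 * V + g + d =
   ((x0 (+) y0) (+) odd g (+) d) + 2 * (V + g %/ 2 + maj (x0 (+) y0) (odd g) d).
  move=> V; rewrite {1}(half_eq g); have := add3 (x0 (+) y0) (odd g) d; lia.
rewrite /term hP hQ !XS !odd_b2 !div_b2 hR modb2 !divb2 eqb2 andbA.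
congr (_ && _); congr (_ && _).
clear hP hQ hR; by case: x0; case: y0; case: (odd a); case: (odd b); case: (odd g); case: c; case: e; case: d.
Qed.

Lemma sum_split2 N (F : nat -> nat) :
  \sum_(0 <= x < 2 * N) F x = \sum_(0 <= x < N) (F (false + 2 * x) + F (true + 2 * x)).
Proof.
elim: N => [|N IH]; first by rewrite muln0 !big_geq.
rewrite [RHS]big_nat_recr // -IH.
have -> : 2 * N.+1 = (2 * N).+1.+1 by lia.
rewrite big_nat_recr; last by lia.
rewrite big_nat_recr // addnA.
rewrite /= add0n add1n.
have E : (N + (N + 0)%coq_nat) = 2 * N by lia.
by rewrite E -addnA.
Qed.

Definition par a b g (c e d : bool) : bool :=
  ~~ (odd a (+) odd b (+) odd g (+) c (+) e (+) d).

Lemma CntS k a b g c e d T :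
  Cnt k.+1 a b g c e d T = par a b g c e d *
   (Cnt k (a %/ 2) (b %/ 2) (g %/ 2) (maj false (odd a) c) (maj false (odd b) e) (maj (false (+) false) (odd g) d) T +
    Cnt k (a %/ 2) (b %/ 2) (g %/ 2) (maj false (odd a) c) (maj true (odd b) e) (maj (false (+) true) (odd g) d) T +
    Cnt k (a %/ 2) (b %/ 2) (g %/ 2) (maj true (odd a) c) (maj false (odd b) e) (maj (true (+) false) (odd g) d) T +
    Cnt k (a %/ 2) (b %/ 2) (g %/ 2) (maj true (odd a) c) (maj true (odd b) e) (maj (true (+) true) (odd g) d) T).
Proof.
rewrite /Cnt expnS sum_split2 -!big_split big_distrr.
apply: eq_big_nat => x hx.
rewrite !sum_split2 -!big_split big_distrr.
apply: eq_big_nat => y hy.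
rewrite !termS /par.
case: (~~ _) => /=; first by rewrite mul1n addnA.
by rewrite mul0n.
Qed.

Fixpoint E (f0 k a : nat) (c : bool) {struct k} : nat :=
  match k with
  | 0 => 1
  | k'.+1 => if odd a == c then 4 * E f0 k' (a %/ 2) (odd a) else F f0 k' (a %/ 2)
  end
with F (f0 k a : nat) {struct k} : nat :=
  match k with
  | 0 => f0
  | k'.+1 => 4 * E f0 k' (a %/ 2) (odd a) + F f0 k' (a %/ 2)
  end.

Lemma ES f0 k a c : E f0 k.+1 a c =
  if odd a == c then 4 * E f0 k (a %/ 2) (odd a) else F f0 k (a %/ 2).
Proof. by []. Qed.
Lemma FS f0 k a : F f0 k.+1 a = 4 * E f0 k (a %/ 2) (odd a) + F f0 k (a %/ 2).
Proof. by []. Qed.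

Lemma EFinv f0 (hf : f0 <= 4) (hf' : 4 <= 3 * f0) k : forall a c,
  F f0 k a <= 4 * E f0 k a c /\ 4 * E f0 k a c <= 3 * F f0 k a.
Proof.
elim: k => [|k IH] a c; first by [].
rewrite ES FS.
have [h1 h2] := IH (a %/ 2) (odd a).
by case: (odd a == c); lia.
Qed.

Lemma Cnt0 a b g c e d T : Cnt 0 a b g c e d T = T (a + c) (b + e) (g + d).
Proof. by rewrite /Cnt expn0 !big_nat1 /term !X0 !divn1 modn1 /= ?X0 !add0n. Qed.

Definition Sce T k a b g d :=
  Cnt k a b g false false d T + Cnt k a b g false true d T +
  Cnt k a b g true false d T + Cnt k a b g true true d T.
Definition Scd T k a b g e :=
  Cnt k a b g false e false T + Cnt k a b g false e true T +
  Cnt k a b g true e false T + Cnt k a b g true e true T.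
Definition Sed T k a b g c :=
  Cnt k a b g c false false T + Cnt k a b g c false true T +
  Cnt k a b g c true false T + Cnt k a b g c true true T.

Lemma bound f0 T (hf : f0 <= 4) (hf' : 4 <= 3 * f0)
  (Hce : forall a b g d, Sce T 0 a b g d <= f0)
  (Hcd : forall a b g e, Scd T 0 a b g e <= f0)
  (Hed : forall a b g c, Sed T 0 a b g c <= f0) k :
  forall a b g,
  (forall c e d, Cnt k a b g c e d T <= E f0 k a c) /\
  (forall d, Sce T k a b g d <= F f0 k a) /\
  (forall e, Scd T k a b g e <= F f0 k a) /\
  (forall c, Sed T k a b g c <= F f0 k a).
Proof.
elim: k => [|k IH] a b g.
  split; first by move=> c e d; rewrite Cnt0 /=; case: (T _ _ _).
  by split; [apply: Hce | split; [apply: Hcd | apply: Hed]].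
have [h1 [hce [hcd hed]]] := IH (a %/ 2) (b %/ 2) (g %/ 2).
have [i1 i2] := EFinv hf hf' k (a %/ 2) false.
have [j1 j2] := EFinv hf hf' k (a %/ 2) true.
move: (h1 false false false) (h1 false false true) (h1 false true false)
  (h1 false true true) (h1 true false false) (h1 true false true)
  (h1 true true false) (h1 true true true)
  (hce false) (hce true) (hcd false) (hcd true) (hed false) (hed true).
rewrite /Sce /Scd /Sed => k1 k2 k3 k4 k5 k6 k7 k8 k9 k10 k11 k12 k13 k14.
clear h1 hce hcd hed.
split; [move=> c e d | split; [move=> d | split; [move=> e | move=> c]]];
rewrite /Sce /Scd /Sed !CntS ?ES ?FS /par /maj;
case: (odd a) i1 i2 j1 j2 k1 k2 k3 k4 k5 k6 k7 k8 k9 k10 k11 k12 k13 k14;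
case: (odd b); case: (odd g); try case: c; try case: e; try case: d; move=> /= *; lia.
Qed.

Lemma exact f0 T (H1 : forall a c, Cnt 0 a a 0 c c false T = 1)
  (H2 : forall a, Sce T 0 a a 0 false = f0) k : forall a,
  (forall c, Cnt k a a 0 c c false T = E f0 k a c) /\ Sce T k a a 0 false = F f0 k a.
Proof.
elim: k => [|k IH] a; first by split => [c|]; rewrite ?H1 ?H2.
have [h1 h2] := IH (a %/ 2).
move: (h1 false) (h1 true) h2; rewrite /Sce => k1 k2 k3.
clear h1.
split; [move=> c|]; rewrite /Sce !CntS ?ES ?FS /par /maj ?div0n;
case: (odd a) k1 k2 k3; try case: c; move=> /= *; lia.
Qed.

Lemma Eshift k : forall a c, E 4 k.+1 a c = 4 * E 2 k a c /\ F 4 k.+1 a = 4 * F 2 k a.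
Proof.
elim: k => [|k IH] a c.
  by rewrite !ES !FS /=; case: (odd a == c).
rewrite [E 4 k.+2 a c]ES [F 4 k.+2 a]FS [E 2 k.+1 a c]ES [F 2 k.+1 a]FS.
have [h1 h2] := IH (a %/ 2) (odd a).
rewrite h1 h2; split; last by lia.
by case: (odd a == c); lia.
Qed.

Lemma card_pairs N (P : nat -> nat -> bool) :
  #|[set p : 'I_N * 'I_N | P p.1 p.2]| = \sum_(0 <= x < N) \sum_(0 <= y < N) P x y.
Proof.
rewrite -sum1_card big_mkcond /=.
rewrite (eq_bigr (fun p : 'I_N * 'I_N => nat_of_bool (P p.1 p.2))); last first.
  by move=> p _; rewrite inE; case: (P _ _).
rewrite -(pair_bigA _ (fun i j : 'I_N => nat_of_bool (P i j))) /=.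
rewrite big_mkord; apply: eq_bigr => i _.
by rewrite big_mkord.
Qed.

Lemma XmodE n p q : X n (p %% 2^n) (q %% 2^n) = X n p q.
Proof. by rewrite [RHS]Xmod. Qed.

Lemma Xsh m (t1 t2 : nat) p q : X m (t1 * 2^m + p) (t2 * 2^m + q) = X m p q.
Proof. by rewrite Xmod [RHS]Xmod !modnMDl. Qed.

Definition Ttrue : nat -> nat -> nat -> bool := fun _ _ _ => true.
Definition Tg (g0 : bool) : nat -> nat -> nat -> bool :=
  fun p q _ => (odd p (+) odd q) == g0.

Lemma xor_cnt n a b g :
  #|[set p : 'I_(2 ^ n) * 'I_(2 ^ n) |
       xorv n (Defs.addv n p.1 a) (Defs.addv n p.2 b) == Defs.addv n (xorv n p.1 p.2) g]| =
  Cnt n a b g false false false Ttrue.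
Proof.
rewrite (@card_pairs (2 ^ n) (fun x y => xorv n (Defs.addv n x a) (Defs.addv n y b) == Defs.addv n (xorv n x y) g)) /Cnt; apply: eq_big_nat => x _; apply: eq_big_nat => y _.
by rewrite /term /Defs.addv !xorvE XmodE !addn0 andbT.
Qed.

Lemma sum_top M (G : nat -> nat) :
  \sum_(0 <= x < 2 * M) G x = \sum_(0 <= x < M) (G (false * M + x) + G (true * M + x)).
Proof.
rewrite (big_cat_nat _ (n := M)) //; last by lia.
have -> : \sum_(M <= x < 2 * M) G x = \sum_(0 <= x < M) G (M + x).
  rewrite -{1}[M]add0n big_addn.
  have -> : 2 * M - M = M by lia.
  by apply: eq_big_nat => x _; rewrite addnC.
by rewrite big_split /= mul1n.
Qed.

Lemma xr_term m a b g (xt yt : bool) x y : x < 2^m -> y < 2^m ->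
  (xr m.+1 1 (Defs.addv m.+1 (xt * 2^m + x) a) (Defs.addv m.+1 (yt * 2^m + y) b)
     == Defs.addv m.+1 (xr m.+1 1 (xt * 2^m + x) (yt * 2^m + y)) g)
  = term m a b (g %/ 2) false false (maj (xt (+) yt) (odd g) false) (Tg (odd g)) x y.
Proof.
move=> hx hy.
have Xsh2 : X m (xt * 2^m + x + a) (yt * 2^m + y + b) = X m (x + a) (y + b).
  by rewrite -!addnA Xsh.
have dv (t : bool) z : (t * 2^m + z) %/ 2^m = t + z %/ 2^m by rewrite divnMDl ?expn_gt0.
have dv2 (t : bool) z : (t * 2^m + z + a) %/ 2^m = t + (z + a) %/ 2^m.
  by rewrite -addnA dv.
have dv3 (t : bool) z : (t * 2^m + z + b) %/ 2^m = t + (z + b) %/ 2^m.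
  by rewrite -addnA dv.
rewrite /xr /Defs.addv !xorvE !XmodE !rotlX Xsh2 Xsh dv2 dv3 !dv.
rewrite (divn_small hx) (divn_small hy) !addn0 !oddD !oddb.
set V := X m x y.
have hR : (xt (+) yt) + (2 * V + g) =
   ((xt (+) yt) (+) odd g (+) false) + 2 * (V + g %/ 2 + maj (xt (+) yt) (odd g) false).
  rewrite {1}(half_eq g); have := add3 (xt (+) yt) (odd g) false; lia.
rewrite -addnA hR modb2 eqb2 /term /Tg !addn0 andbC; congr (_ && _).
clear Xsh2 hR; by case: xt; case: yt; case: (odd ((x + a) %/ 2 ^ m)); case: (odd ((y + b) %/ 2 ^ m)); case: (odd g).
Qed.

Lemma xr_cnt m a b g :
  #|[set p : 'I_(2 ^ m.+1) * 'I_(2 ^ m.+1) |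
       xr m.+1 1 (Defs.addv m.+1 p.1 a) (Defs.addv m.+1 p.2 b)
       == Defs.addv m.+1 (xr m.+1 1 p.1 p.2) g]| =
  Cnt m a b (g %/ 2) false false (maj (false (+) false) (odd g) false) (Tg (odd g)) +
  Cnt m a b (g %/ 2) false false (maj (false (+) true) (odd g) false) (Tg (odd g)) +
  Cnt m a b (g %/ 2) false false (maj (true (+) false) (odd g) false) (Tg (odd g)) +
  Cnt m a b (g %/ 2) false false (maj (true (+) true) (odd g) false) (Tg (odd g)).
Proof.
rewrite (@card_pairs (2 ^ m.+1) (fun x y => xr m.+1 1 (Defs.addv m.+1 x a) (Defs.addv m.+1 y b)
       == Defs.addv m.+1 (xr m.+1 1 x y) g)).
rewrite expnS sum_top /Cnt -!big_split; apply: eq_big_nat => x /andP[_ hx].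
rewrite !sum_top -!big_split; apply: eq_big_nat => y /andP[_ hy].
rewrite !xr_term // /=; lia.
Qed.
Import Order.TTheory GRing.Theory Num.Theory.

Lemma ratle (c1 c2 K : nat) : 0 < K -> c1 <= c2 ->
  ((c1%:R / K%:R : rat) <= c2%:R / K%:R)%R.
Proof. by move=> hK h; rewrite ler_pM2r ?invr_gt0 ?ltr0n // ler_nat. Qed.

Lemma bigmax_eq N (G : 'I_N -> 'I_N -> rat) (v : rat) i0 j0 :
  (0 <= v)%R -> (forall i j, (G i j <= v)%R) -> G i0 j0 = v ->
  \big[Num.max/0%R]_(i < N) \big[Num.max/0%R]_(j < N) G i j = v.
Proof.
move=> h0 hle hG; apply/eqP; rewrite eq_le; apply/andP; split.
  apply: (big_ind (fun x => x <= v)%R) => //.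
    by move=> x y hx hy; rewrite ge_max hx hy.
  move=> i _; apply: (big_ind (fun x => x <= v)%R) => //.
  by move=> x y hx hy; rewrite ge_max hx hy.
rewrite -hG (bigD1 i0) //= le_max; apply/orP; left.
by rewrite (bigD1 j0) //= le_max lexx.
Qed.

Lemma Ttrue_ce a b g d : Sce Ttrue 0 a b g d <= 4.
Proof. by rewrite /Sce !Cnt0. Qed.
Lemma Ttrue_cd a b g e : Scd Ttrue 0 a b g e <= 4.
Proof. by rewrite /Scd !Cnt0. Qed.
Lemma Ttrue_ed a b g c : Sed Ttrue 0 a b g c <= 4.
Proof. by rewrite /Sed !Cnt0. Qed.
Lemma Tg_ce g0 a b g d : Sce (Tg g0) 0 a b g d <= 2.
Proof. by rewrite /Sce !Cnt0 /Tg !oddD !oddb; case: (odd a); case: (odd b); case: g0. Qed.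
Lemma Tg_cd g0 a b g e : Scd (Tg g0) 0 a b g e <= 2.
Proof. by rewrite /Scd !Cnt0 /Tg !oddD !oddb; case: (odd a); case: (odd b); case: g0; case: e. Qed.
Lemma Tg_ed g0 a b g c : Sed (Tg g0) 0 a b g c <= 2.
Proof. by rewrite /Sed !Cnt0 /Tg !oddD !oddb; case: (odd a); case: (odd b); case: g0; case: c. Qed.

Lemma Ttrue_1 a c : Cnt 0 a a 0 c c false Ttrue = 1.
Proof. by rewrite Cnt0. Qed.
Lemma Ttrue_2 a : Sce Ttrue 0 a a 0 false = 4.
Proof. by rewrite /Sce !Cnt0. Qed.
Lemma Tg_1 a c : Cnt 0 a a 0 c c false (Tg false) = 1.
Proof. by rewrite Cnt0 /Tg addbb. Qed.
Lemma Tg_2 a : Sce (Tg false) 0 a a 0 false = 2.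
Proof. by rewrite /Sce !Cnt0 /Tg !oddD !oddb; case: (odd a). Qed.

Theorem corollary3 (n : nat) (hn : 2 <= n) (a : 'I_(2 ^ n)) :
  max_adp n (xr n 1) a = adp n (xorv n) a a 0
  /\ adp n (xorv n) a a 0 = max_adp n (xorv n) a.
Proof.
have h0 : 0 < 2 ^ n by rewrite expn_gt0.
have h4 : 0 < 4 ^ n by rewrite expn_gt0.

have hv : adp n (xorv n) a a 0 = ((E 4 n a false)%:R / (4 ^ n)%:R)%R.
  by rewrite /adp xor_cnt (exact Ttrue_1 Ttrue_2 n a).1.
have hv0 : (0 <= adp n (xorv n) a a 0)%R by rewrite hv divr_ge0 ?ler0n.
split; last first.
  apply/esym; rewrite /max_adp; apply: (bigmax_eq (i0 := a) (j0 := Ordinal h0)) => //.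
  move=> i j; rewrite hv /adp xor_cnt; apply: ratle => //.
  exact: ((bound (f0 := 4) (T := Ttrue) _ _ Ttrue_ce Ttrue_cd Ttrue_ed n a i j).1 false false false).
case: n hn a h0 h4 hv hv0 => [//|m] hn a h0 h4 hv hv0.
have [hE _] := Eshift m a false.
rewrite /max_adp; apply: (bigmax_eq (i0 := a) (j0 := Ordinal h0)) => //.
  move=> i j; rewrite hv /adp xr_cnt; apply: ratle => //; rewrite hE.
  have hb d := ((bound (f0 := 2) (T := Tg (odd j)) isT isT (@Tg_ce _) (@Tg_cd _) (@Tg_ed _) m a i (j %/ 2)).1 false false d).
  move: (hb (maj (false (+) false) (odd j) false)) (hb (maj (false (+) true) (odd j) false))
    (hb (maj (true (+) false) (odd j) false)) (hb (maj (true (+) true) (odd j) false)).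
  lia.
rewrite hv /adp xr_cnt hE /= ?div0n /maj /=.
by rewrite (exact Tg_1 Tg_2 m a).1; congr (_%:R / _)%R; lia.
Qed.
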